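(* Let $F:[0,1]^{N}\times[0,1]\to\mathbb{R}$ be a non-constant analytic function, and let $M\in\mathbb{N}$ be such that for every $\mathbf{x}\in[0,1]^{N}$ and every $\delta>0$ the set $\mathcal{F}_{\mathbf{x},\delta}$ is a union of at most $M$ intervals. Then for all $(\epsilon,\delta)\in A$ and all $\mathbf{x}\in\Sigma_{\epsilon}$, \[ 1-\left|\mathcal{F}_{\mathbf{x},\delta}\right|\leq\epsilon(M+1). \]
   Context: $\mathcal{F}_{\mathbf{x},\delta}=\{t\in[0,1]:|F(\mathbf{x},t)|\geq\delta\}$; $|\cdot|$ is Lebesgue measure. $\Sigma=\{\mathbf{x}\in[0,1]^{N}:F(\mathbf{x},t)=0\ \forall t\in[0,1]\}$, $\Sigma_{\epsilon}=\{\mathbf{x}\in[0,1]^{N}:\operatorname{dist}(\mathbf{x},\Sigma)\geq\epsilon\}$ (with $\Sigma_\epsilon=[0,1]^N$ if $\Sigma=\emptyset$). $A=\{(\epsilon,\delta)\in(0,1]^{2}:\ \forall\mathbf{x}\in\Sigma_{\epsilon},\ \forall\xi\in[0,1],\ (\xi-\tfrac{\epsilon}{2},\xi+\tfrac{\epsilon}{2})\cap\mathcal{F}_{\mathbf{x},\delta}\neq\emptyset\}$. *)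

(* Defs.v *)
From HB Require Import structures.
From mathcomp Require Import all_boot all_order all_algebra.
From mathcomp Require Import all_classical all_reals all_analysis.
Set Implicit Arguments. Unset Strict Implicit. Unset Printing Implicit Defensive.
Import Order.TTheory GRing.Theory Num.Theory.
Import numFieldNormedType.Exports.
Local Open Scope classical_set_scope.
Local Open Scope ring_scope.

Section Defs.
Variables (R : realType) (N : nat).
Implicit Types (F : ('I_N -> R) -> R -> R) (x y p : 'I_N -> R).

Definition cube x : Prop := forall i, 0 <= x i <= 1.

Definition Fset F x (d : R) : set R :=
  [set t | 0 <= t <= 1 /\ d <= `|F x t|].

Definition Sigma F : set ('I_N -> R) :=
  [set x | cube x /\ forall t, 0 <= t <= 1 -> F x t = 0].

Definition edist x y : R := Num.sqrt (\sum_(i < N) (x i - y i) ^+ 2).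

(* Sigma_eps = { x in [0,1]^N : dist(x, Sigma) >= eps }, i.e. inf_{y in Sigma} |x-y| >= eps;
   when Sigma is empty this is the whole cube. *)
Definition Sigma_eps F (e : R) : set ('I_N -> R) :=
  [set x | cube x /\ forall y, Sigma F y -> e <= edist x y].

Definition inA F (e d : R) : Prop :=
  (0 < e <= 1) /\ (0 < d <= 1) /\
  forall x, Sigma_eps F e x -> forall xi, 0 <= xi <= 1 ->
    exists t, xi - e / 2 < t < xi + e / 2 /\ Fset F x d t.

(* degree-n homogeneous part of the power series with coefficients c
   (indexed by multi-index alpha in N^N for x and k in N for t) centered at (p,q),
   evaluated at (y,s); abs = true gives the sum of absolute values of the terms. *)
Definition hom_part (c : ('I_N -> nat) -> nat -> R) p (q : R) y (s : R)
  (abs : bool) (n : nat) : R :=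
  \sum_(a : {ffun 'I_N -> 'I_n.+1}) \sum_(k < n.+1)
    if (\sum_(i < N) (a i : nat) + k == n)%N then
      let term := c (fun i => (a i : nat)) k *
                  (\prod_(i < N) (y i - p i) ^+ (a i)) * (s - q) ^+ k in
      if abs then `|term| else term
    else 0.

(* real analyticity of F on [0,1]^N x [0,1]: around every point of the domain F
   is given (on the domain) by an absolutely convergent power series. *)
Definition analytic_on_cube F : Prop :=
  forall p q, cube p -> 0 <= q <= 1 ->
  exists r : R, 0 < r /\
  exists c : ('I_N -> nat) -> nat -> R,
  forall y s, cube y -> 0 <= s <= 1 ->
    (forall i, `|y i - p i| < r) -> `|s - q| < r ->
    (fun n => \sum_(0 <= m < n) hom_part c p q y s false m) @ \oo --> F y s /\
    (exists l : R, (fun n => \sum_(0 <= m < n) hom_part c p q y s true m) @ \oo --> l).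

Definition nonconstant_on_cube F : Prop :=
  exists x t y s, cube x /\ 0 <= t <= 1 /\ cube y /\ 0 <= s <= 1 /\ F x t != F y s.

Definition union_of_at_most (M : nat) (S : set R) : Prop :=
  exists l : seq (interval R), (size l <= M)%N /\
    S = [set t | exists2 I, I \in l & t \in I].

End Defs.

(* Main.v *)
Require Import Defs.
Set Warnings "-notation-overridden,-ambiguous-paths,-notation-incompatible-prefix".
From HB Require Import structures.
From mathcomp Require Import all_boot all_order all_algebra.
From mathcomp Require Import all_classical all_reals all_analysis.
From mathcomp Require Import lra.
Import Order.TTheory GRing.Theory Num.Theory.
Import numFieldNormedType.Exports.
Local Open Scope classical_set_scope.
Local Open Scope ring_scope.
Set Implicit Arguments.
Section S.
Variable R : realType.
Definition ub (I : interval R) : R :=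
  match I with Interval _ (BSide _ y) => y | _ => 0 end.

Lemma key (I : interval R) s t : s \in I -> t \notin I -> s < t -> s <= ub I <= t.
Proof.
case: I => lb u; rewrite !itv_boundlr => /andP[hl hu].
move=> hut st.
have hlt : (lb <= BLeft t)%O.
  by apply: (le_trans hl); rewrite bnd_simp ltW.
move: hut; rewrite hlt /=.
case: u hu => [b y|b] /=; case: b; rewrite ?bnd_simp => hu hut.
all: try (apply/andP; split).
all: try lra.
all: by [].
Qed.

Lemma m01 : lebesgue_measure (`[0, 1]%classic : set R) = 1%E.
Proof. rewrite lebesgue_measure_itv /= lte_fin ltr01 /= oppr0 adde0 //. Qed.

Lemma mseg (a e : R) : 0 <= e -> lebesgue_measure (`[a, a + e]%classic : set R) = e%:E.
Proof.
move=> he; rewrite lebesgue_measure_itv /= lte_fin.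
case: ifPn => h.
  by rewrite -EFinD addrAC subrr add0r.
have -> : e = 0 by lra.
by [].
Qed.

Lemma union_big (l : seq (interval R)) :
  [set t | exists2 I, I \in l & t \in I] = \big[setU/set0]_(I <- l) [set` I].
Proof.
elim: l => [|I l IH]; rewrite ?big_nil ?big_cons; apply/seteqP; split => t /=.
- by case=> J; rewrite in_nil.
- by [].
- case=> J; rewrite inE => /orP[/eqP -> |hJ ht]; first by left.
  by right; rewrite -IH; exists J.
- case=> [ht|]; first by exists I; rewrite ?mem_head.
  by rewrite -IH => -[J hJ ht]; exists J => //; rewrite inE hJ orbT.
Qed.

Lemma in_C (e : R) (l : seq (interval R)) I t : I \in l -> ub I <= t <= ub I + e ->
  (\big[setU/set0]_(J <- l) (`[ub J, (ub J + e)%R]%classic : set R)) t.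
Proof.
elim: l => [|J l IH]; first by rewrite in_nil.
rewrite inE big_cons => /orP[/eqP <- h|hI h]; [left|right; exact: IH].
by rewrite /= in_itv /= h.
Qed.

Lemma mC (e : R) (l : seq (interval R)) : 0 <= e ->
  (lebesgue_measure (\big[setU/set0]_(J <- l) (`[ub J, (ub J + e)%R]%classic : set R))
    <= ((size l)%:R * e)%:E)%E.
Proof.
move=> he; elim: l => [|J l IH]; first by rewrite big_nil measure0 mul0r.
rewrite big_cons /=.
apply: (le_trans (measureU2 _ _ _)).
- exact: measurable_itv.
- by apply: bigsetU_measurable => i _; exact: measurable_itv.
have h1 : (lebesgue_measure (`[ub J, (ub J + e)%R]%classic : set R) <= e%:E)%E.
  by rewrite mseg.
apply: le_trans (leeD h1 IH) _.
by rewrite -EFinD lee_fin -addn1 natrD mulrDl mul1r addrC.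
Qed.
End S.
Unset Implicit Arguments.
Arguments ub {R}.
Arguments key {R I s t}.
Arguments mseg {R}.
Arguments union_big {R}.
Arguments in_C {R e l I t}.
Arguments mC {R}.
Theorem lemma2p2 (R : realType) (N : nat) (F : ('I_N -> R) -> R -> R) (M : nat) :
  analytic_on_cube F ->
  nonconstant_on_cube F ->
  (forall x (d : R), cube x -> 0 < d -> union_of_at_most M (Fset F x d)) ->
  forall e d : R, inA F e d ->
  forall x, Sigma_eps F e x ->
  (1%:E - lebesgue_measure (Fset F x d) <= (e * (M.+1)%:R)%:E)%E.
Proof.
move=> _ _ hU e d [/andP[e0 e1] [/andP[d0 d1] hA]] x hx.
have [l [hl hF]] := hU x d hx.1 d0.
set S := Fset F x d.
have mS : measurable S.
  by rewrite /S hF union_big; apply: bigsetU_measurable => *; exact: measurable_itv.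
set B := \big[setU/set0]_(J <- l) (`[ub J, (ub J + e)%R]%classic : set R).
have mB : measurable B.
  by apply: bigsetU_measurable => *; exact: measurable_itv.
set C := (`[0, e]%classic : set R) `|` B.
have mC_ : measurable C by apply: measurableU => //; exact: measurable_itv.
have cover : (`[0, 1]%classic : set R) `<=` S `|` C.
  move=> t /=; rewrite in_itv /= => /andP[t0 t1].
  case: (pselect (S t)) => hSt; [by left|right].
  case: (leP t e) => hte; [left; by rewrite /= in_itv /= t0 hte|right].
  have [s [/andP[s1 s2] hs]] := hA x hx (t - e/2) ltac:(apply/andP; split; lra).
  have : [set t | exists2 I, I \in l & t \in I] s.
    by move: hs; rewrite hF.
  move=> -[I hI sI].
  have tI : t \notin I.
    apply/negP => tI; apply: hSt; rewrite /S hF; by exists I.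
  have /andP[k1 k2] := key sI tI ltac:(lra).
  apply: (in_C hI); apply/andP; split; lra.
have h1 : (1 <= lebesgue_measure S + lebesgue_measure C)%E.
  rewrite -(@m01 R).
  have hU2 := measureU2 lebesgue_measure mS mC_.
  have hle : (lebesgue_measure (`[0%R, 1%R]%classic : set R) <= lebesgue_measure (S `|` C))%E.
    apply: le_measure; rewrite ?inE //; try exact: measurable_itv; try exact: measurableU.
  exact: le_trans hle hU2.
have hC : (lebesgue_measure C <= (e * (M.+1)%:R)%:E)%E.
  have hU3 := measureU2 lebesgue_measure (measurable_itv (Interval (BLeft (0:R)) (BRight e))) mB.
  apply: le_trans hU3 _.
  have h0 : (lebesgue_measure (`[0%R, e]%classic : set R) <= e%:E)%E.
    by have := mseg 0 e (ltW e0); rewrite add0r => ->.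
  have hD := leeD h0 (mC e l (ltW e0)).
  apply: le_trans hD _.
  rewrite -EFinD lee_fin mulrSr mulrDr mulr1 addrC lerD2r mulrC.
  by rewrite ler_wpM2l ?(ltW e0) // ler_nat.
have hSf : lebesgue_measure S \is a fin_num.
  rewrite ge0_fin_numE ?measure_ge0 //.
  apply: (@le_lt_trans _ _ (lebesgue_measure (`[0%R, 1%R]%classic : set R))).
    apply: le_measure; rewrite ?inE //; try exact: measurable_itv.
    by move=> t [/andP[t0 t1] _]; rewrite /= in_itv /= t0 t1.
  by rewrite m01 ltry.
rewrite leeBlDr //; apply: le_trans h1 _; rewrite addeC.
exact: (leeD2r (lebesgue_measure S) hC).
Qed.
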